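(* Let $\Sigma=(X,\mathcal{U},\phi)$ be an ordered control system which is monotone (with respect to states and inputs), and let $\mathcal{U}_c\subseteq\mathcal{U}$. Assume: (i) there exists $\rho\in\mathcal{K}_\infty$ such that for all $x_-,x,x_+\in X$ with $x_-\le x\le x_+$ one has $\|x\|_X\le\rho(\|x_-\|_X+\|x_+\|_X)$; (ii) there exist $\eta,\xi\in\mathcal{K}_\infty$ such that for every $x\in X$, every $u\in\mathcal{U}(x)$ and every $\varepsilon>0$ there exist $x_-,x_+\in X$, $u_-\in\mathcal{U}(x_-)\cap\mathcal{U}_c$, $u_+\in\mathcal{U}(x_+)\cap\mathcal{U}_c$ with $x_-\le x\le x_+$, $u_-\le u\le u_+$, $\max(\|u_-\|_{\mathcal{U}},\|u_+\|_{\mathcal{U}})\le\eta(\|u\|_{\mathcal{U}}+\varepsilon)$ and $\max(\|x_-\|_X,\|x_+\|_X)\le\xi(\|x\|_X+\|u\|_{\mathcal{U}}+\varepsilon)$. Then $\Sigma$ is ISS if and only if $\Sigma$ is ISS with respect to inputs in $\mathcal{U}_c$. Moreover, if $\rho$ and $\xi$ are linear, then $\Sigma$ is exp-ISS if and only if $\Sigma$ is exp-ISS with respect to inputs in $\mathcal{U}_c$; and if in addition $\Sigma$ is exp-ISS w.r.t. inputs in $\mathcal{U}_c$ with a linear gain function and $\eta$ is linear, then $\Sigma$ is exp-ISS with a linear gain function.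
   Context: Comparison functions: $\mathcal{K}$ is the set of continuous strictly increasing $\gamma:\mathbb{R}_+\to\mathbb{R}_+$ with $\gamma(0)=0$; $\mathcal{K}_\infty$ the unbounded functions in $\mathcal{K}$; $\mathcal{L}$ the continuous decreasing $\gamma:\mathbb{R}_+\to\mathbb{R}_+$ with $\gamma(t)\to0$; $\mathcal{KL}$ the functions $\beta:\mathbb{R}_+^2\to\mathbb{R}_+$ with $\beta(\cdot,t)\in\mathcal{K}$ for all $t\ge0$ and $\beta(r,\cdot)\in\mathcal{L}$ for all $r>0$. A control system $\Sigma=(X,\mathcal{U},\phi)$ consists of a normed linear space $X$ (state space), a set $U$ of input values (nonempty subset of a normed linear space), a normed linear space $\mathcal{U}$ of functions $\mathbb{R}_+\to U$ closed under time shifts $u\mapsto u(\cdot+\tau)$, nonempty sets $\mathcal{U}(x)\subseteq\mathcal{U}$ of admissible inputs for each $x\in X$, and a map $\phi$ such that for every $x\in X$, $u\in\mathcal{U}(x)$ and $t\ge0$ the state $\phi(t,x,u)\in X$ is defined, $\phi(0,x,u)=x$, $\phi(t,x,u)=\phi(t,x,\tilde u)$ whenever $\tilde u\in\mathcal{U}(x)$ agrees with $u$ on $[0,t]$, and $u(t+\cdot)\in\mathcal{U}(\phi(t,x,u))$ with $\phi(h,\phi(t,x,u),u(t+\cdot))=\phi(t+h,x,u)$ for all $t,h\ge0$. A positive cone in a normed linear space $X$ is a set $K$ with $K\cap(-K)=\{0\}$, $ax\in K$ and $x+y\in K$ for all $a\ge0$, $x,y\in K$; it induces the order $x\le y\iff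 y-x\in K$. The system is ordered if $X$ and $\mathcal{U}$ carry such orders. It is monotone if for all $t\ge0$, all $x_1\le x_2$ in $X$ and all $u_1\in\mathcal{U}(x_1)$, $u_2\in\mathcal{U}(x_2)$ with $u_1\le u_2$ one has $\phi(t,x_1,u_1)\le\phi(t,x_2,u_2)$. For $\mathcal{U}_c\subseteq\mathcal{U}$, $\Sigma$ is ISS with respect to inputs in $\mathcal{U}_c$ if there exist $\beta\in\mathcal{KL}$, $\gamma\in\mathcal{K}$ such that $\|\phi(t,x,u)\|_X\le\beta(\|x\|_X,t)+\gamma(\|u\|_{\mathcal{U}})$ for all $t\ge0$, all $x\in X$ and all $u\in\mathcal{U}(x)\cap\mathcal{U}_c$; ISS means ISS w.r.t. inputs in $\mathcal{U}$. $\Sigma$ is exp-ISS w.r.t. inputs in $\mathcal{U}_c$ if there exist constants $M,a>0$ and $\gamma\in\mathcal{K}_\infty$ with $\|\phi(t,x,u)\|_X\le Me^{-at}\|x\|_X+\gamma(\|u\|_{\mathcal{U}})$ for the same range of $t,x,u$; exp-ISS means exp-ISS w.r.t. inputs in $\mathcal{U}$; ''with a linear gain function'' means $\gamma$ can be chosen linear. *)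

(* Defs.v *)
From Stdlib Require Import Reals.
Open Scope R_scope.

Record NormedSpace := {
  ns_car :> Type;
  ns_zero : ns_car;
  ns_add : ns_car -> ns_car -> ns_car;
  ns_opp : ns_car -> ns_car;
  ns_scal : R -> ns_car -> ns_car;
  ns_norm : ns_car -> R;
  ns_addA : forall x y z, ns_add x (ns_add y z) = ns_add (ns_add x y) z;
  ns_addC : forall x y, ns_add x y = ns_add y x;
  ns_add0 : forall x, ns_add x ns_zero = x;
  ns_addN : forall x, ns_add x (ns_opp x) = ns_zero;
  ns_scalA : forall a b x, ns_scal a (ns_scal b x) = ns_scal (a * b) x;
  ns_scal1 : forall x, ns_scal 1 x = x;
  ns_scalDr : forall a x y, ns_scal a (ns_add x y) = ns_add (ns_scal a x) (ns_scal a y);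
  ns_scalDl : forall a b x, ns_scal (a + b) x = ns_add (ns_scal a x) (ns_scal b x);
  ns_norm_nonneg : forall x, 0 <= ns_norm x;
  ns_norm_eq0 : forall x, ns_norm x = 0 -> x = ns_zero;
  ns_normZ : forall a x, ns_norm (ns_scal a x) = Rabs a * ns_norm x;
  ns_norm_triangle : forall x y, ns_norm (ns_add x y) <= ns_norm x + ns_norm y
}.

Arguments ns_zero {n}.
Arguments ns_add {n}.
Arguments ns_opp {n}.
Arguments ns_scal {n}.
Arguments ns_norm {n}.

Record Cone (N : NormedSpace) := {
  cone_set : N -> Prop;
  cone_pointed : forall x, cone_set x -> cone_set (ns_opp x) -> x = ns_zero;
  cone_scal : forall a x, 0 <= a -> cone_set x -> cone_set (ns_scal a x);
  cone_add : forall x y, cone_set x -> cone_set y -> cone_set (ns_add x y)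
}.

Arguments cone_set {N}.

Definition cone_le {N : NormedSpace} (K : Cone N) (x y : N) : Prop :=
  cone_set K (ns_add y (ns_opp x)).

(** * Control systems Sigma = (X, Ucal, phi)
    - [cs_X] : the state space X (normed linear space);
    - [cs_V] : normed linear space containing the set [cs_Uval] = U of input values;
    - [cs_W] : the normed linear space Ucal of input functions R_+ -> U; its
      elements are identified with functions via [cs_eval] (linear, injective
      on R_+, so Ucal is a linear space of functions with pointwise operations);
    - [cs_shift tau u] = u(. + tau);
    - [cs_adm x] = Ucal(x), the admissible inputs at x;
    - [cs_phi t x u] = phi(t,x,u). *)
Record ControlSystem := {
  cs_X : NormedSpace;
  cs_V : NormedSpace;
  cs_Uval : cs_V -> Prop;
  cs_Uval_nonempty : exists v, cs_Uval v;
  cs_W : NormedSpace;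
  cs_eval : cs_W -> R -> cs_V;
  cs_eval_add : forall u w s, 0 <= s ->
     cs_eval (ns_add u w) s = ns_add (cs_eval u s) (cs_eval w s);
  cs_eval_scal : forall a u s, 0 <= s ->
     cs_eval (ns_scal a u) s = ns_scal a (cs_eval u s);
  cs_eval_inj : forall u w, (forall s, 0 <= s -> cs_eval u s = cs_eval w s) -> u = w;
  cs_eval_val : forall u s, 0 <= s -> cs_Uval (cs_eval u s);
  cs_shift : R -> cs_W -> cs_W;
  cs_shift_spec : forall tau u s, 0 <= tau -> 0 <= s ->
     cs_eval (cs_shift tau u) s = cs_eval u (s + tau);
  cs_adm : cs_X -> cs_W -> Prop;
  cs_adm_nonempty : forall x, exists u, cs_adm x u;
  cs_phi : R -> cs_X -> cs_W -> cs_X;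
  cs_phi0 : forall x u, cs_adm x u -> cs_phi 0 x u = x;
  cs_causal : forall t x u u', 0 <= t -> cs_adm x u -> cs_adm x u' ->
     (forall s, 0 <= s <= t -> cs_eval u s = cs_eval u' s) ->
     cs_phi t x u = cs_phi t x u';
  cs_cocycle_adm : forall t x u, 0 <= t -> cs_adm x u ->
     cs_adm (cs_phi t x u) (cs_shift t u);
  cs_cocycle : forall t h x u, 0 <= t -> 0 <= h -> cs_adm x u ->
     cs_phi h (cs_phi t x u) (cs_shift t u) = cs_phi (t + h) x u
}.

(** * Comparison functions (functions R -> R, only their values on R_+ matter) *)
Definition cont_on_Rplus (g : R -> R) : Prop :=
  forall r, 0 <= r -> forall eps, 0 < eps -> exists delta, 0 < delta /\
    forall s, 0 <= s -> Rabs (s - r) < delta -> Rabs (g s - g r) < eps.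

Definition classK (g : R -> R) : Prop :=
  cont_on_Rplus g /\ g 0 = 0 /\
  (forall r, 0 <= r -> 0 <= g r) /\
  (forall r s, 0 <= r -> r < s -> g r < g s).

Definition classKinf (g : R -> R) : Prop :=
  classK g /\ (forall M, exists r, 0 <= r /\ M < g r).

Definition classL (g : R -> R) : Prop :=
  cont_on_Rplus g /\ (forall r, 0 <= r -> 0 <= g r) /\
  (forall r s, 0 <= r -> r <= s -> g s <= g r) /\
  (forall eps, 0 < eps -> exists T, 0 <= T /\ forall t, T <= t -> g t < eps).

Definition classKL (b : R -> R -> R) : Prop :=
  (forall t, 0 <= t -> classK (fun r => b r t)) /\
  (forall r, 0 < r -> classL (fun t => b r t)).

Definition linear_fun (g : R -> R) : Prop :=
  exists c, forall r, 0 <= r -> g r = c * r.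

Definition monotone (S : ControlSystem) (KX : Cone (cs_X S)) (KU : Cone (cs_W S)) : Prop :=
  forall t x1 x2 u1 u2, 0 <= t ->
    cone_le KX x1 x2 -> cs_adm S x1 u1 -> cs_adm S x2 u2 -> cone_le KU u1 u2 ->
    cone_le KX (cs_phi S t x1 u1) (cs_phi S t x2 u2).

Definition ISS_wrt (S : ControlSystem) (Uc : cs_W S -> Prop) : Prop :=
  exists beta gamma, classKL beta /\ classK gamma /\
    forall t x u, 0 <= t -> cs_adm S x u -> Uc u ->
      ns_norm (cs_phi S t x u) <= beta (ns_norm x) t + gamma (ns_norm u).

Definition ISS (S : ControlSystem) : Prop := ISS_wrt S (fun _ => True).

Definition expISS_wrt (S : ControlSystem) (Uc : cs_W S -> Prop) : Prop :=
  exists M a gamma, 0 < M /\ 0 < a /\ classKinf gamma /\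
    forall t x u, 0 <= t -> cs_adm S x u -> Uc u ->
      ns_norm (cs_phi S t x u) <= M * exp (- a * t) * ns_norm x + gamma (ns_norm u).

Definition expISS (S : ControlSystem) : Prop := expISS_wrt S (fun _ => True).

Definition expISS_lin_wrt (S : ControlSystem) (Uc : cs_W S -> Prop) : Prop :=
  exists M a gamma, 0 < M /\ 0 < a /\ classKinf gamma /\ linear_fun gamma /\
    forall t x u, 0 <= t -> cs_adm S x u -> Uc u ->
      ns_norm (cs_phi S t x u) <= M * exp (- a * t) * ns_norm x + gamma (ns_norm u).

Definition expISS_lin (S : ControlSystem) : Prop := expISS_lin_wrt S (fun _ => True).

(* Main.v *)
Require Import Defs.
From Stdlib Require Import Reals Lra.
Open Scope R_scope.

Lemma K_mono g : classK g -> forall r s, 0<=r -> r<=s -> g r <= g s.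
Proof.
  intros [_ [_ [_ H]]] r s hr hrs.
  destruct (Rle_lt_or_eq_dec r s hrs) as [h|h]; [left; apply H; auto| subst; lra].
Qed.

Lemma K_nonneg g : classK g -> forall r, 0<=r -> 0<= g r.
Proof. intros [_ [_ [H _]]]; auto. Qed.

Lemma K_split g : classK g -> forall a b, 0<=a -> 0<=b -> g (a+b) <= g (2*a) + g (2*b).
Proof.
  intros Hg a b ha hb.
  destruct (Rle_dec a b).
  - assert (g (a+b) <= g (2*b)) by (apply (K_mono g Hg); lra).
    assert (0 <= g (2*a)) by (apply (K_nonneg g Hg); lra). lra.
  - assert (g (a+b) <= g (2*a)) by (apply (K_mono g Hg); lra).
    assert (0 <= g (2*b)) by (apply (K_nonneg g Hg); lra). lra.
Qed.

Lemma cont_lim g a b s : cont_on_Rplus g -> 0<=s ->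
  (forall e, 0<e -> a <= b + g (s+e)) -> a <= b + g s.
Proof.
  intros Hg hs H.
  destruct (Rle_dec a (b + g s)) as [h|h]; auto. exfalso.
  destruct (Hg s hs (a - b - g s)) as [d [hd Hd]]; [lra|].
  specialize (H (d/2) ltac:(lra)).
  specialize (Hd (s + d/2)). assert (hs2 : 0 <= s + d/2) by lra. specialize (Hd hs2).
  assert (h1 : Rabs (s + d/2 - s) < d).
  { replace (s + d/2 - s) with (d/2) by ring. rewrite Rabs_right; lra. }
  specialize (Hd h1). apply Rabs_def2 in Hd. lra.
Qed.

Lemma cont_comp f g : cont_on_Rplus f -> (forall r, 0<=r -> 0<=f r) ->
  cont_on_Rplus g -> cont_on_Rplus (fun r => g (f r)).
Proof.
  intros Hf Hfp Hg r hr e he.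
  destruct (Hg (f r) (Hfp r hr) e he) as [d1 [hd1 Hd1]].
  destruct (Hf r hr d1 hd1) as [d [hd Hd]].
  exists d; split; [exact hd|]. intros s hs hsr.
  apply Hd1; auto.
Qed.

Lemma cont_scal c f : cont_on_Rplus f -> cont_on_Rplus (fun r => c * f r).
Proof.
  intros Hf r hr e he.
  assert (hk : 0 <= Rabs c) by apply Rabs_pos.
  destruct (Hf r hr (e / (Rabs c + 1))) as [d [hd Hd]].
  { apply Rdiv_lt_0_compat; lra. }
  exists d; split; auto. intros s hs hsr.
  specialize (Hd s hs hsr).
  replace (c * f s - c * f r) with (c * (f s - f r)) by ring.
  rewrite Rabs_mult.
  set (X := Rabs (f s - f r)) in *.
  assert (0 <= X) by apply Rabs_pos.
  assert (X * (Rabs c + 1) < e).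
  { replace e with (e / (Rabs c + 1) * (Rabs c + 1)) by (field; lra).
    apply Rmult_lt_compat_r; lra. }
  nra.
Qed.

Lemma cont_id : cont_on_Rplus (fun r => r).
Proof. intros r hr e he. exists e; split; auto. Qed.

Lemma cont_add f g : cont_on_Rplus f -> cont_on_Rplus g -> cont_on_Rplus (fun r => f r + g r).
Proof.
  intros Hf Hg r hr e he.
  destruct (Hf r hr (e/2)) as [d1 [hd1 Hd1]]; [lra|].
  destruct (Hg r hr (e/2)) as [d2 [hd2 Hd2]]; [lra|].
  exists (Rmin d1 d2); split; [apply Rmin_pos; auto|].
  intros s hs hsr.
  assert (h1 := Hd1 s hs (Rlt_le_trans _ _ _ hsr (Rmin_l _ _))).
  assert (h2 := Hd2 s hs (Rlt_le_trans _ _ _ hsr (Rmin_r _ _))).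
  replace (f s + g s - (f r + g r)) with ((f s - f r) + (g s - g r)) by ring.
  eapply Rle_lt_trans; [apply Rabs_triang|]. lra.
Qed.

Lemma K_comp f g : classK f -> classK g -> classK (fun r => g (f r)).
Proof.
  intros Hf Hg. pose proof Hf as [cf [f0 [fp fs]]]. pose proof Hg as [cg [g0 [gp gs]]].
  split; [apply cont_comp; auto|].
  split; [rewrite f0; auto|].
  split; [intros; apply gp; auto|].
  intros r s hr hrs. apply gs; auto.
Qed.

Lemma K_scal c f : 0 < c -> classK f -> classK (fun r => c * f r).
Proof.
  intros hc Hf. pose proof Hf as [cf [f0 [fp fs]]].
  split; [apply cont_scal; auto|].
  split; [rewrite f0; ring|].
  split; [intros; apply Rmult_le_pos; [lra|auto]|].
  intros r s hr hrs. apply Rmult_lt_compat_l; auto.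
Qed.

Lemma K_id : classK (fun r => r).
Proof. split; [apply cont_id|]. split; [reflexivity|]. split; [auto|]. auto. Qed.

Lemma K_add f g : classK f -> classK g -> classK (fun r => f r + g r).
Proof.
  intros Hf Hg. pose proof Hf as [cf [f0 [fp fs]]]. pose proof Hg as [cg [g0 [gp gs]]].
  split; [apply cont_add; auto|].
  split; [rewrite f0, g0; ring|].
  split; [intros r hr; specialize (fp r hr); specialize (gp r hr); lra|].
  intros r s hr hrs. specialize (fs r s hr hrs); specialize (gs r s hr hrs); lra.
Qed.

Lemma L_compK f g : classL f -> classK g -> classL (fun t => g (f t)).
Proof.
  intros [cf [fp [fm ft]]] Hg. pose proof Hg as [cg [g0 [gp gs]]].
  split; [apply cont_comp; auto|].
  split; [intros; apply gp; auto|].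
  split; [intros r s hr hrs; apply (K_mono g Hg); auto; apply fp; lra|].
  intros e he.
  destruct (cg 0 (Rle_refl 0) e he) as [d [hd Hd]].
  destruct (ft d hd) as [T [hT HT]].
  exists T; split; auto. intros t ht.
  assert (h0 : 0 <= f t) by (apply fp; lra).
  assert (h1 := HT t ht).
  assert (h2 : Rabs (f t - 0) < d) by (rewrite Rminus_0_r, Rabs_right; lra).
  specialize (Hd (f t) h0 h2). rewrite g0, Rminus_0_r in Hd.
  apply Rabs_def2 in Hd. lra.
Qed.

Lemma KL_mono_t b : classKL b -> forall c t, 0<=c -> 0<=t -> b c t <= b c 0.
Proof.
  intros [HK HL] c t hc ht.
  destruct (Rle_lt_or_eq_dec 0 c hc) as [h|h].
  - destruct (HL c h) as [_ [_ [Hm _]]]. apply Hm; lra.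
  - subst. destruct (HK t ht) as [_ [e1 _]]. destruct (HK 0 (Rle_refl 0)) as [_ [e2 _]].
    simpl in *. lra.
Qed.

Theorem mainTheorem2
  (S : ControlSystem) (KX : Cone (cs_X S)) (KU : Cone (cs_W S))
  (Uc : cs_W S -> Prop)
  (rho eta xi : R -> R)
  (Hmono : monotone S KX KU)
  (Hrho : classKinf rho)
  (Hi : forall xm x xp : cs_X S, cone_le KX xm x -> cone_le KX x xp ->
          ns_norm x <= rho (ns_norm xm + ns_norm xp))
  (Heta : classKinf eta) (Hxi : classKinf xi)
  (Hii : forall (x : cs_X S) (u : cs_W S) (eps : R), cs_adm S x u -> 0 < eps ->
          exists (xm xp : cs_X S) (um up : cs_W S),
            cs_adm S xm um /\ Uc um /\ cs_adm S xp up /\ Uc up /\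
            cone_le KX xm x /\ cone_le KX x xp /\
            cone_le KU um u /\ cone_le KU u up /\
            Rmax (ns_norm um) (ns_norm up) <= eta (ns_norm u + eps) /\
            Rmax (ns_norm xm) (ns_norm xp) <= xi (ns_norm x + ns_norm u + eps)) :
  (ISS S <-> ISS_wrt S Uc) /\
  (linear_fun rho -> linear_fun xi ->
     (expISS S <-> expISS_wrt S Uc) /\
     (expISS_lin_wrt S Uc -> linear_fun eta -> expISS_lin S)).
Proof.
  assert (Hsand : forall t x u eps, 0<=t -> cs_adm S x u -> 0<eps ->
    exists xm xp um up, cs_adm S xm um /\ Uc um /\ cs_adm S xp up /\ Uc up /\
      ns_norm (cs_phi S t x u) <= rho (ns_norm (cs_phi S t xm um) + ns_norm (cs_phi S t xp up)) /\
      ns_norm xm <= xi (ns_norm x + ns_norm u + eps) /\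
      ns_norm xp <= xi (ns_norm x + ns_norm u + eps) /\
      ns_norm um <= eta (ns_norm u + eps) /\
      ns_norm up <= eta (ns_norm u + eps)).
  { intros t x u eps ht hadm he.
    destruct (Hii x u eps hadm he) as
      (xm & xp & um & up & h1 & h2 & h3 & h4 & h5 & h6 & h7 & h8 & h9 & h10).
    exists xm, xp, um, up.
    split; [exact h1|]. split; [exact h2|]. split; [exact h3|]. split; [exact h4|].
    split; [apply Hi; apply Hmono; auto|].
    split; [eapply Rle_trans; [apply Rmax_l|exact h10]|].
    split; [eapply Rle_trans; [apply Rmax_r|exact h10]|].
    split; [eapply Rle_trans; [apply Rmax_l|exact h9]|].
    eapply Rle_trans; [apply Rmax_r|exact h9]. }
  destruct Hrho as [Krho _]. destruct Heta as [Keta _]. destruct Hxi as [Kxi _].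
  split.
  - split.
    + intros (b & g & hb & hg & H). exists b, g; split; [exact hb|]. split; [exact hg|].
      intros; apply H; auto.
    + intros (b & g & hb & hg & H).
      set (b' := fun r t => rho (2 * (2 * b (2 * xi (2 * r)) t))).
      set (g' := fun s => rho (2 * (2 * b (2 * xi (2 * s)) 0 + 2 * g (eta s)))).
      assert (Kxi2 : classK (fun r => 2 * xi (2 * r))).
      { apply (K_scal 2 (fun r => xi (2 * r))); [lra|].
        apply (K_comp (fun r => 2 * r) xi); auto. apply (K_scal 2 (fun r => r)); [lra|apply K_id]. }
      assert (Kg' : classK g').
      { apply (K_comp (fun s => 2 * (2 * b (2 * xi (2 * s)) 0 + 2 * g (eta s))) rho); auto.
        apply (K_scal 2 (fun s => 2 * b (2 * xi (2 * s)) 0 + 2 * g (eta s))); [lra|].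
        apply (K_add (fun s => 2 * b (2 * xi (2 * s)) 0) (fun s => 2 * g (eta s))).
        - apply (K_scal 2 (fun s => b (2 * xi (2 * s)) 0)); [lra|].
          apply (K_comp (fun s => 2 * xi (2 * s)) (fun c => b c 0)); auto.
          apply (proj1 hb); lra.
        - apply (K_scal 2 (fun s => g (eta s))); [lra|].
          apply (K_comp eta g); auto. }
      exists b', g'. split; [|split; [exact Kg'|]].
      * split.
        -- intros t ht. unfold b'.
           apply (K_comp (fun r => 2 * (2 * b (2 * xi (2 * r)) t)) rho); auto.
           apply (K_scal 2 (fun r => 2 * b (2 * xi (2 * r)) t)); [lra|].
           apply (K_scal 2 (fun r => b (2 * xi (2 * r)) t)); [lra|].
           apply (K_comp (fun r => 2 * xi (2 * r)) (fun c => b c t)); auto.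
           apply (proj1 hb); auto.
        -- intros r hr. unfold b'.
           assert (hc : 0 < 2 * xi (2 * r)).
           { destruct Kxi2 as [_ [e0 [_ Hs]]]. rewrite <- e0 at 1. apply Hs; lra. }
           apply (L_compK (fun t => b (2 * xi (2 * r)) t) (fun v => rho (2 * (2 * v)))).
           ++ apply (proj2 hb); auto.
           ++ apply (K_comp (fun v => 2 * (2 * v)) rho); auto.
              apply (K_scal 2 (fun v => 2 * v)); [lra|].
              apply (K_scal 2 (fun v => v)); [lra|apply K_id].
      * intros t x u ht hadm _.
        set (r := ns_norm x). set (s := ns_norm u).
        assert (hr : 0 <= r) by apply ns_norm_nonneg.
        assert (hs : 0 <= s) by apply ns_norm_nonneg.
        apply (cont_lim g' _ _ s); [exact (proj1 Kg')|exact hs|].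
        intros e he.
        destruct (Hsand t x u e ht hadm he) as
          (xm & xp & um & up & h1 & h2 & h3 & h4 & h5 & h6 & h7 & h8 & h9).
        fold r s in h5, h6, h7, h8, h9.
        set (D := r + s + e) in *.
        assert (hD : 0 <= D) by (unfold D; lra).
        assert (hxiD : 0 <= xi D) by (apply (K_nonneg _ Kxi); auto).
        assert (hse : 0 <= s + e) by lra.
        assert (hetaD : 0 <= eta (s + e)) by (apply (K_nonneg _ Keta); auto).
        set (Q := b (xi D) t + g (eta (s + e))).
        assert (hm : ns_norm (cs_phi S t xm um) <= Q).
        { eapply Rle_trans; [apply H; auto|]. unfold Q. apply Rplus_le_compat.
          - apply (K_mono _ (proj1 hb t ht)); auto. apply ns_norm_nonneg.
          - apply (K_mono _ hg); auto. apply ns_norm_nonneg. }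
        assert (hp : ns_norm (cs_phi S t xp up) <= Q).
        { eapply Rle_trans; [apply H; auto|]. unfold Q. apply Rplus_le_compat.
          - apply (K_mono _ (proj1 hb t ht)); auto. apply ns_norm_nonneg.
          - apply (K_mono _ hg); auto. apply ns_norm_nonneg. }
        assert (hxisplit : xi D <= xi (2 * r) + xi (2 * (s + e))).
        { unfold D. replace (r + s + e) with (r + (s + e)) by ring.
          apply K_split; auto. }
        assert (hx1 : 0 <= xi (2 * r)) by (apply (K_nonneg _ Kxi); lra).
        assert (hx2 : 0 <= xi (2 * (s+e))) by (apply (K_nonneg _ Kxi); lra).
        assert (hbsplit : b (xi D) t <= b (2 * xi (2 * r)) t + b (2 * xi (2 * (s + e))) 0).
        { eapply Rle_trans.
          { apply (K_mono _ (proj1 hb t ht)); [exact hxiD|exact hxisplit]. }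
          eapply Rle_trans; [apply (K_split _ (proj1 hb t ht)); auto|].
          apply Rplus_le_compat_l. apply (KL_mono_t b hb); lra. }
        set (A := 2 * b (2 * xi (2 * r)) t).
        set (B := 2 * b (2 * xi (2 * (s + e))) 0 + 2 * g (eta (s + e))).
        assert (hA : 0 <= A).
        { unfold A. apply Rmult_le_pos; [lra|]. apply (K_nonneg _ (proj1 hb t ht)); lra. }
        assert (hB : 0 <= B).
        { unfold B. apply Rplus_le_le_0_compat; apply Rmult_le_pos; try lra.
          - apply (K_nonneg _ (proj1 hb 0 (Rle_refl 0))); lra.
          - apply (K_nonneg _ hg); auto. }
        assert (hQ : 2 * Q <= A + B) by (unfold A, B, Q; lra).
        eapply Rle_trans; [exact h5|].
        eapply Rle_trans.
        { apply (K_mono _ Krho). 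
          - apply Rplus_le_le_0_compat; apply ns_norm_nonneg.
          - instantiate (1 := A + B). lra. }
        eapply Rle_trans; [apply K_split; auto|].
        unfold b', g', A, B. right. f_equal.
  - intros [cr Hcr] [cx Hcx].
    assert (hcr : 0 < cr).
    { destruct Krho as [_ [e0 [_ Hs]]]. specialize (Hs 0 1 (Rle_refl 0) Rlt_0_1).
      rewrite e0, Hcr in Hs by lra. lra. }
    assert (hcx : 0 < cx).
    { destruct Kxi as [_ [e0 [_ Hs]]]. specialize (Hs 0 1 (Rle_refl 0) Rlt_0_1).
      rewrite e0, Hcx in Hs by lra. lra. }
    assert (Hcore : forall (g : R -> R) M a, classK g -> 0 < M ->
       (forall t x u, 0 <= t -> cs_adm S x u -> Uc u ->
          ns_norm (cs_phi S t x u) <= M * exp (- a * t) * ns_norm x + g (ns_norm u)) ->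
       forall t x u e, 0 <= t -> cs_adm S x u -> 0 < e ->
       ns_norm (cs_phi S t x u) <= cr * (2 * (M * exp (- a * t) * (cx * (ns_norm x + ns_norm u + e))
                                       + g (eta (ns_norm u + e))))).
    { intros g M a hg hM H t x u e ht hadm he.
      destruct (Hsand t x u e ht hadm he) as
          (xm & xp & um & up & h1 & h2 & h3 & h4 & h5 & h6 & h7 & h8 & h9).
      assert (hr : 0 <= ns_norm x) by apply ns_norm_nonneg.
      assert (hs : 0 <= ns_norm u) by apply ns_norm_nonneg.
      rewrite Hcx in h6, h7 by lra.
      assert (hE : 0 < exp (- a * t)) by apply exp_pos.
      assert (hME : 0 <= M * exp (- a * t)) by (apply Rmult_le_pos; lra).
      set (Q := M * exp (- a * t) * (cx * (ns_norm x + ns_norm u + e)) + g (eta (ns_norm u + e))).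
      assert (hse : 0 <= ns_norm u + e) by lra.
      assert (hetaD : 0 <= eta (ns_norm u + e)) by (apply (K_nonneg _ Keta); auto).
      assert (hm : ns_norm (cs_phi S t xm um) <= Q).
      { eapply Rle_trans; [apply H; auto|]. unfold Q. apply Rplus_le_compat.
        - apply Rmult_le_compat_l; auto.
        - apply (K_mono _ hg); auto. apply ns_norm_nonneg. }
      assert (hp : ns_norm (cs_phi S t xp up) <= Q).
      { eapply Rle_trans; [apply H; auto|]. unfold Q. apply Rplus_le_compat.
        - apply Rmult_le_compat_l; auto.
        - apply (K_mono _ hg); auto. apply ns_norm_nonneg. }
      assert (h0 : 0 <= ns_norm (cs_phi S t xm um) + ns_norm (cs_phi S t xp up))
        by (apply Rplus_le_le_0_compat; apply ns_norm_nonneg).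
      rewrite Hcr in h5 by exact h0.
      eapply Rle_trans; [exact h5|]. apply Rmult_le_compat_l; lra. }
    assert (hE1 : forall a t, 0 < a -> 0 <= t -> exp (- a * t) <= 1).
    { intros a t ha ht. rewrite <- exp_0. destruct (Rle_lt_or_eq_dec 0 t ht) as [h|h].
      - left. apply exp_increasing. nra.
      - subst. right. f_equal. ring. }
    split.
    + split.
      * intros (M & a & g & hM & ha & hg & H). exists M, a, g.
        split; [exact hM|]. split; [exact ha|]. split; [exact hg|]. intros; apply H; auto.
      * intros (M & a & g & hM & ha & hg & H).
        set (k := 2 * cr * cx * M).
        assert (hk : 0 < k) by (unfold k; repeat apply Rmult_lt_0_compat; lra).
        set (g' := fun s => k * s + 2 * cr * g (eta s)).
        assert (Kg' : classK g').
        { apply (K_add (fun s => k * s) (fun s => 2 * cr * g (eta s))).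
          - apply (K_scal k (fun s => s)); [exact hk|apply K_id].
          - apply (K_scal (2 * cr) (fun s => g (eta s))); [lra|].
            apply (K_comp eta g); auto. apply (proj1 hg). }
        exists k, a, g'. split; [exact hk|]. split; [exact ha|]. split.
        { split; [exact Kg'|]. intros Mb. exists (Rabs Mb / k + 1).
          assert (0 <= Rabs Mb / k) by (apply Rmult_le_pos; [apply Rabs_pos|left; apply Rinv_0_lt_compat; lra]).
          split; [lra|]. unfold g'.
          assert (0 <= 2 * cr * g (eta (Rabs Mb / k + 1))).
          { apply Rmult_le_pos; [lra|]. apply (K_nonneg _ (proj1 hg)).
            apply (K_nonneg _ Keta). lra. }
          replace (k * (Rabs Mb / k + 1)) with (Rabs Mb + k) by (field; lra).
          pose proof (Rle_abs Mb). lra. }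
        intros t x u ht hadm _.
        apply (cont_lim g' _ _ (ns_norm u)); [exact (proj1 Kg')|apply ns_norm_nonneg|].
        intros e he.
        eapply Rle_trans; [apply (Hcore g M a (proj1 hg) hM H t x u e ht hadm he)|].
        unfold g', k.
        assert (hr : 0 <= ns_norm x) by apply ns_norm_nonneg.
        assert (hs : 0 <= ns_norm u) by apply ns_norm_nonneg.
        assert (hE : 0 < exp (- a * t)) by apply exp_pos.
        assert (hE' := hE1 a t ha ht).
        set (E := exp (- a * t)) in *.
        set (r := ns_norm x) in *. set (s := ns_norm u) in *.
        assert (hX : 0 <= M * cx * (s + e)) by (apply Rmult_le_pos; [nra|lra]).
        assert (M * E * (s + e) * cx <= M * cx * (s + e)) by nra.
        nra.
    + intros (M & a & g & hM & ha & hg & [cg Hcg] & H) [ce Hce].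
      assert (hcg : 0 <= cg).
      { pose proof (K_nonneg _ (proj1 hg) 1 ltac:(lra)) as h. rewrite Hcg in h by lra. lra. }
      assert (hce : 0 < ce).
      { destruct Keta as [_ [e0 [_ Hs]]]. specialize (Hs 0 1 (Rle_refl 0) Rlt_0_1).
        rewrite e0, Hce in Hs by lra. lra. }
      set (k := 2 * cr * cx * M).
      assert (hk : 0 < k) by (unfold k; repeat apply Rmult_lt_0_compat; lra).
      set (C := k + 2 * cr * cg * ce).
      assert (hC : 0 < C) by (unfold C; assert (0 <= cr * cg * ce) by (apply Rmult_le_pos; nra); lra).
      exists k, a, (fun s => C * s). split; [exact hk|]. split; [exact ha|]. split.
      { split.
        - apply (K_scal C (fun s => s)); [exact hC|apply K_id].
        - intros Mb. exists (Rabs Mb / C + 1).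
          assert (0 <= Rabs Mb / C) by (apply Rmult_le_pos; [apply Rabs_pos|left; apply Rinv_0_lt_compat; lra]).
          split; [lra|].
          replace (C * (Rabs Mb / C + 1)) with (Rabs Mb + C) by (field; lra).
          pose proof (Rle_abs Mb). lra. }
      split; [exists C; auto|].
      intros t x u ht hadm _.
      apply (cont_lim (fun s => C * s) _ _ (ns_norm u));
        [apply (cont_scal C (fun s => s) cont_id)|apply ns_norm_nonneg|].
      intros e he.
      eapply Rle_trans; [apply (Hcore g M a (proj1 hg) hM H t x u e ht hadm he)|].
      assert (hr : 0 <= ns_norm x) by apply ns_norm_nonneg.
      assert (hs : 0 <= ns_norm u) by apply ns_norm_nonneg.
      rewrite Hce by lra. rewrite Hcg by nra.
      unfold C, k.
      assert (hE : 0 < exp (- a * t)) by apply exp_pos.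
      assert (hE' := hE1 a t ha ht).
      set (E := exp (- a * t)) in *.
      set (r := ns_norm x) in *. set (s := ns_norm u) in *.
      assert (hX : 0 <= M * cx * (s + e)) by (apply Rmult_le_pos; [nra|lra]).
      assert (M * E * (s + e) * cx <= M * cx * (s + e)) by nra.
      nra.
Qed.
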